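(* Let $k$ be a positive integer, $q=4^k$, and $\Lambda:=\mathbb{F}_{4^k}\setminus\{-1,-\xi,-\xi^2\}$ (note $-1=1$ in characteristic $2$). Then $$\sum_{a\in\Lambda}\left[\eta\Big(\frac{a^2+a+1}{a^2+1}\Big)+\eta^2\Big(\frac{a^2+a+1}{a^2+1}\Big)\right]=-2+(-2)^{k+1}.$$
   Context: Here $q=4^k\equiv 1\pmod 3$. Let $\xi\in\mathbb{F}_q$ be a fixed cube root of unity with $\xi\neq 1$, and let $\delta\in\mathbb{C}$ be a fixed cube root of unity with $\delta\neq1$. Let $\eta:\mathbb{F}_q\to\mathbb{C}$ be the cubic multiplicative character defined by $\eta(0)=0$ and, for $c\in\mathbb{F}_q^*$ and integers $j$, $\eta(c)=\delta^j$ if and only if $c^{\frac{q-1}{3}}=\xi^j$. We write $\eta^2(c)$ for $\eta(c)^2$. *)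

(* Defs.v *)
From HB Require Import structures.
From mathcomp Require Import all_boot all_order all_algebra all_field.
Set Implicit Arguments. Unset Strict Implicit. Unset Printing Implicit Defensive.
Import GRing.Theory Num.Theory.
Local Open Scope ring_scope.

(* Cubic multiplicative character eta : F -> algC, F finite with q = #|F|,
   xi a fixed nontrivial cube root of unity in F, delta one in algC:
   eta 0 = 0 and eta c = delta^j iff c^((q-1)/3) = xi^j.
   Since c^((q-1)/3) is a cube root of unity when q = 1 mod 3, it is one of
   1, xi, xi^2; we pick j in {0,1,2} accordingly (defaulting to 2). *)
Definition cubic_eta (F : finFieldType) (xi : F) (delta : algC) (c : F) : algC :=
  if c == 0 then 0
  else let e := c ^+ ((#|F| - 1) %/ 3)%N in
       if e == 1 then 1
       else if e == xi then delta
       else delta ^+ 2.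

(* Main.v *)
Require Import Defs.
From HB Require Import structures.
From mathcomp Require Import all_boot all_order all_algebra all_field.
From mathcomp Require Import ring zify.
Set Implicit Arguments. Unset Strict Implicit. Unset Printing Implicit Defensive.
Import GRing.Theory Num.Theory.
Local Open Scope ring_scope.


Lemma sum_fiber (T T' : finType) (V : nmodType) (f : T -> T') (h : T' -> V) :
  \sum_x h (f x) = \sum_t h t *+ #|[set x | f x == t]|.
Proof.
rewrite (partition_big f xpredT) //; apply: eq_bigr => t _.
rewrite (eq_bigr (fun _ => h t)) => [|x /eqP <-//].
by rewrite -sumr_const; apply: eq_bigl => x; rewrite inE.
Qed.

Lemma card_fibers (T T' : finType) (f : T -> T') :
  \sum_t #|[set x | f x == t]| = #|T|.
Proof.
rewrite -sum1_card (eq_bigl xpredT) // (sum_fiber f (fun _ => 1%N)).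
apply: eq_bigr => t _; elim: #|_| => // m IH; by rewrite mulrS -IH.
Qed.

Lemma sat (T : finType) (A : {set T}) (f : T -> nat) c :
  (forall t, t \in A -> (f t <= c)%N) -> (c * #|A| <= \sum_(t in A) f t)%N ->
  forall t, t \in A -> f t = c.
Proof.
move=> le hs t tA.
have eqs : (\sum_(t in A) (c - f t) + \sum_(t in A) f t = c * #|A|)%N.
  rewrite -big_split /= (eq_bigr (fun _ => c)) => [|i iA]; last by rewrite subnK ?le.
  by rewrite sum_nat_const mulnC.
have : (\sum_(t in A) (c - f t) == 0)%N.
  have : (\sum_(t in A) f t <= c * #|A|)%N.
    by rewrite -eqs leq_addl.
  move=> h2; move: eqs; lia.
rewrite sum_nat_eq0 => /forall_inP /(_ t tA); rewrite subn_eq0 => h.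
by apply/eqP; rewrite eqn_leq le.
Qed.


Lemma cube_root2 (R : comNzRingType) (z : R) : GRing.lreg (z - 1) -> z ^+ 3 = 1 -> z ^+ 2 + z + 1 = 0.
Proof.
move=> reg z3; apply: reg; rewrite mulr0.
have ->: (z - 1) * (z ^+ 2 + z + 1) = z ^+ 3 - 1 by ring.
by rewrite z3 subrr.
Qed.

Lemma card_sum (T : finType) (P : pred T) : #|[set x | P x]| = (\sum_x (P x : nat))%N.
Proof.
rewrite -sum1_card big_mkcond /=; apply: eq_bigr => x _; rewrite inE; by case: (P x).
Qed.

Section Main.
Variables (F : finFieldType) (k : nat) (xi : F).
Hypotheses (k_gt0 : (0 < k)%N) (cardF : #|F| = (4 ^ k)%N) (xi3 : xi ^+ 3 = 1) (xi1 : xi != 1).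

Let n := (2 * k)%N.
Lemma cardF2 : #|F| = (2 ^ n)%N.
Proof. by rewrite cardF /n expnM. Qed.
Lemma char2 : (2%N \in [pchar F]).
Proof. exact: (card_finPcharP cardF2 (isT : prime 2)). Qed.
Lemma opp2 (x : F) : - x = x. Proof. have := @oppr_pchar2 F char2. by []. Qed.
Lemma two0 : (2%:R : F) = 0. Proof. exact: pcharf0 char2. Qed.
Lemma addxx (x : F) : x + x = 0.
Proof. by rewrite -mulr2n -mulr_natr two0 mulr0. Qed.
Lemma addeq0 (x y : F) : (x + y == 0) = (x == y).
Proof. by rewrite addr_eq0 opp2. Qed.
Lemma sqrD (x y : F) : (x + y) ^+ 2 = x ^+ 2 + y ^+ 2.
Proof. by rewrite sqrrD -mulr_natr two0 mulr0 addr0. Qed.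
Lemma exp2D i (x y : F) : (x + y) ^+ (2 ^ i) = x ^+ (2 ^ i) + y ^+ (2 ^ i).
Proof. by elim: i => [|i IH]; rewrite ?expn0 ?expr1 // expnSr !exprM IH sqrD. Qed.
Lemma xi2 : xi ^+ 2 + xi + 1 = 0.
Proof.
have: (xi - 1) * (xi ^+ 2 + xi + 1) = 0.
  have ->: (xi - 1) * (xi ^+ 2 + xi + 1) = xi ^+ 3 - 1 by ring.
  by rewrite xi3 subrr.
by move/eqP; rewrite mulf_eq0 subr_eq0 (negbTE xi1) => /eqP.
Qed.
Lemma cube_fact (y : F) : (y - 1) * (y - xi) * (y - xi ^+ 2) = y ^+ 3 - 1.
Proof.
have: (y - 1) * (y - xi) * (y - xi ^+ 2) = y ^+ 3 - xi ^+ 3 + (xi ^+ 2 + xi + 1) * (xi * y - y ^+ 2) by ring.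
by rewrite xi2 mul0r addr0 xi3.
Qed.

Lemma n_gt0 : (0 < n)%N. Proof. by rewrite /n muln_gt0. Qed.
Lemma expq (x : F) : x ^+ (2 ^ n) = x.
Proof. by rewrite -cardF2 expf_card. Qed.

Definition Tr (x : F) := \sum_(i < n) x ^+ (2 ^ i).

Lemma TrD x y : Tr (x + y) = Tr x + Tr y.
Proof. by rewrite /Tr -big_split; apply: eq_bigr => i _; rewrite exp2D. Qed.

Lemma Tr_sq x : Tr (x ^+ 2) = Tr x.
Proof.
rewrite /Tr; move: expq; case: n n_gt0 => // N _ eq.
rewrite big_ord_recr big_ord_recl /= addrC; congr (_ + _).
  by rewrite -exprM -expnS eq expn0 expr1.
by apply: eq_bigr => i _; rewrite -exprM -expnS.
Qed.

Lemma sqr_sum (I : finType) (f : I -> F) : (\sum_i f i) ^+ 2 = \sum_i f i ^+ 2.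
Proof. by apply: (big_morph (fun x => x ^+ 2) sqrD); rewrite expr0n. Qed.

Lemma Tr_idem x : Tr x ^+ 2 = Tr x.
Proof. by rewrite -{2}Tr_sq /Tr sqr_sum; apply: eq_bigr => i _; rewrite exprAC. Qed.

Lemma Tr01 x : Tr x = 0 \/ Tr x = 1.
Proof.
have: Tr x * (Tr x - 1) = 0 by rewrite mulrBr mulr1 -expr2 Tr_idem subrr.
by move/eqP; rewrite mulf_eq0 subr_eq0 => /orP[] /eqP; [left|right].
Qed.

Lemma Tr_art y : Tr (y ^+ 2 + y) = 0.
Proof. by rewrite TrD Tr_sq addxx. Qed.

Lemma Tr1 : Tr 1 = 0.
Proof.
rewrite /Tr (eq_bigr (fun _ => 1)) => [|i _]; last by rewrite expr1n.
by rewrite sumr_const card_ord /n mulnC mulrnA -mulr_natr two0 mulr0.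
Qed.

Lemma card_roots (P : {poly F}) : P != 0 -> (#|[set x | root P x]| < size P)%N.
Proof.
move=> nz; rewrite cardE; apply: max_poly_roots => //; last exact: enum_uniq.
by apply/allP => x; rewrite mem_enum inE.
Qed.

Definition Ptr : {poly F} := \sum_(i < n) 'X^(2 ^ i).

Lemma hornerPtr x : Ptr.[x] = Tr x.
Proof. by rewrite /Ptr horner_sum; apply: eq_bigr => i _; rewrite hornerXn. Qed.

Lemma Ptr_neq0 : Ptr != 0.
Proof.
apply/eqP => /(congr1 (fun p : {poly F} => p`_1)); rewrite coef0 /Ptr coef_sum.
rewrite (bigD1 (Ordinal n_gt0)) //= big1 ?addr0 ?coefXn ?expn0.
  by move/eqP; rewrite oner_eq0.
move=> i /eqP ne; rewrite coefXn -[in 1%N](expn0 2) eqn_exp2l //.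
by case: eqP => // e; case: ne; apply: val_inj.
Qed.

Lemma size_Ptr : (size Ptr <= (2 ^ n.-1).+1)%N.
Proof.
apply: leq_trans (size_sum _ _ _) _; apply/bigmax_leqP => i _.
by rewrite size_polyXn ltnS leq_exp2l // -ltnS prednK ?n_gt0.
Qed.

Lemma card_ker : (#|[set x | Tr x == 0%R]| <= 2 ^ n.-1)%N.
Proof.
have := leq_trans (card_roots Ptr_neq0) size_Ptr; rewrite ltnS.
by apply: leq_trans; apply: subset_leq_card; apply/subsetP => x; rewrite !inE /root hornerPtr.
Qed.

Lemma exists_Tr1 : exists u, Tr u = 1.
Proof.
have : (#|[set x | Tr x == 0%R]| < #|F|)%N.
  apply: leq_ltn_trans card_ker _; rewrite cardF2; move: n_gt0.
  by case: n => // N _; rewrite expnS /= mul2n -addnn -{1}(add0n (2 ^ N)%N) ltn_add2r expn_gt0.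
case: (pickP (fun u => Tr u != 0)) => [u Hu | H].
  by move=> _; exists u; case: (Tr01 u) Hu => ->; rewrite ?eqxx.
suff ->: [set x | Tr x == 0%R] = setT by rewrite cardsT ltnn.
by apply/setP => x; rewrite !inE; move: (H x) => /= /negbFE ->.
Qed.

Definition psi (t : F) : int := if Tr t == 0 then 1 else -1.

Lemma psi_Tr a b : Tr a = Tr b -> psi a = psi b.
Proof. by rewrite /psi => ->. Qed.

Lemma psiD s t : psi (s + t) = psi s * psi t.
Proof.
rewrite /psi TrD; case: (Tr01 s) => ->; case: (Tr01 t) => ->;
  by rewrite ?addr0 ?add0r ?addxx ?eqxx ?oner_eq0 ?mulr1 ?mul1r ?mulrNN.
Qed.

Lemma Tr0 : Tr 0 = 0.
Proof. by rewrite /Tr big1 // => i _; rewrite expr0n expn_eq0. Qed.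

Lemma psi0 : psi 0 = 1. Proof. by rewrite /psi Tr0 eqxx. Qed.
Lemma psi1 : psi 1 = 1. Proof. by rewrite /psi Tr1 eqxx. Qed.

Lemma psi_lin w : w != 0 -> \sum_x psi (x * w) = 0.
Proof.
move=> wn0; have [u Tu] := exists_Tr1.
have psiu : psi u = -1 by rewrite /psi Tu oner_eq0.
set S := \sum_x _.
have: S = - S.
  rewrite {1}/S (reindex_inj (addIr (u / w))) /= /S -sumrN.
  apply: eq_bigr => x _; rewrite mulrDl divfK // psiD psiu mulrN1 //.
lia.
Qed.

Lemma psi_lin0 : \sum_x psi (x * 0) = #|F|%:Z.
Proof.
rewrite (eq_bigr (fun _ => 1)) => [|x _]; last by rewrite mulr0 psi0.
by rewrite sumr_const -natz.
Qed.

Definition wf (z : F) := z ^+ (2 ^ n.-1) + z ^+ 2.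

Lemma cube_exp (x z : F) : x ^+ 3 + (x + z) ^+ 3 = x ^+ 2 * z + x * z ^+ 2 + z ^+ 3.
Proof.
have ->: x ^+ 3 + (x + z) ^+ 3 = x ^+ 2 * z + x * z ^+ 2 + z ^+ 3
   + (1 + 1) * (x ^+ 3 + x ^+ 2 * z + x * z ^+ 2) by ring.
by rewrite addxx mul0r addr0.
Qed.

Lemma psi_key x z : psi (x ^+ 3) * psi ((x + z) ^+ 3) = psi (x * wf z) * psi (z ^+ 3).
Proof.
rewrite -psiD cube_exp !psiD /wf mulrDr psiD; congr (_ * _ * _).
apply: psi_Tr; rewrite -(Tr_sq (x * z ^+ (2 ^ n.-1))); congr Tr.
rewrite exprMn -exprM mulnC -expnS prednK ?n_gt0 // expq //.
Qed.

Lemma wf0 z : (wf z == 0) = (z ^+ 4 == z).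
Proof.
rewrite /wf addeq0; apply/eqP/eqP => [e | e].
  have := congr1 (fun y => y ^+ 2) e; rewrite -!exprM -expnSr prednK ?n_gt0 //.
  by rewrite expq => h; rewrite {2}h.
have ->: n.-1 = (2 * k.-1).+1 by rewrite /n; case: k k_gt0 => // K _; rewrite mulnS.
elim: k.-1 => [|j IH]; first by rewrite muln0 expn1.
have ->: ((2 * j.+1).+1 = (2 * j).+1 + 2)%N by lia.
by rewrite expnD exprM IH -exprM mulnC exprM e.
Qed.

Lemma xi0 : xi != 0.
Proof. by apply/eqP => e; move: xi3; rewrite e expr0n => /eqP; rewrite eq_sym oner_eq0. Qed.

Lemma z4 z : (z ^+ 4 == z) = (z \in [:: 0; 1; xi; xi ^+ 2]).
Proof.
have ->: (z ^+ 4 == z) = (z * ((z - 1) * (z - xi) * (z - xi ^+ 2)) == 0).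
  by rewrite cube_fact mulrBr mulr1 -exprS subr_eq0.
by rewrite !mulf_eq0 !subr_eq0 !inE !orbA.
Qed.

Lemma uniq4 : uniq [:: 0; 1; xi; xi ^+ 2].
Proof.
rewrite /= !inE !negb_or !andbT.
have x2n1 : xi ^+ 2 != 1.
  by apply: contraNneq xi1 => e; rewrite -xi3 exprS e mulr1.
have x2nx : xi ^+ 2 != xi.
  apply: contraNneq xi1 => e2; apply/eqP; apply: (mulfI xi0).
  by rewrite mulr1 -expr2 e2.
rewrite eq_sym oner_eq0 eq_sym xi0 eq_sym (expf_neq0 _ xi0) /=.
by rewrite eq_sym xi1 eq_sym x2n1 eq_sym x2nx.
Qed.

Definition SQ := \sum_x psi (x ^+ 3).

Lemma SQ_sq : SQ * SQ = 4 * #|F|%:Z.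
Proof.
rewrite /SQ mulr_suml.
rewrite (eq_bigr (fun x => \sum_z psi (x * wf z) * psi (z ^+ 3))); last first.
  move=> x _; rewrite mulr_sumr (reindex_inj (addrI x)) /=.
  by apply: eq_bigr => z _; rewrite psi_key.
rewrite exchange_big /=.
rewrite (eq_bigr (fun z => if z \in [:: 0; 1; xi; xi ^+ 2] then #|F|%:Z else 0)); last first.
  move=> z _; rewrite -mulr_suml -z4 -wf0.
  case: eqP => [e | /eqP ne]; last by rewrite psi_lin // mul0r.
  rewrite e psi_lin0; move: e => /eqP; rewrite wf0 z4 !inE.
  by case/or4P => /eqP ->; rewrite ?expr0n ?expr1n ?xi3 ?(exprAC xi 2 3) ?xi3 ?expr1n ?psi0 ?psi1 ?mulr1.
rewrite (bigID (fun i => i \in [:: 0; 1; xi; xi ^+ 2])) /= [X in _ + X]big1 ?addr0; last by move=> i /negbTE ->.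
rewrite (eq_bigr (fun _ => #|F|%:Z)) => [|i ->//]; rewrite sumr_const.
have c4 : #|[:: 0; 1; xi; xi ^+ 2]| = 4%N by apply/card_uniqP; exact: uniq4.
by rewrite c4 mulr_natl.
Qed.

Definition fib (t : F) := #|[set y : F | y ^+ 2 + y == t]|.
Definition cf (t : F) := #|[set x : F | x ^+ 3 == t]|.

Lemma fib_le2 t : (fib t <= 2)%N.
Proof.
rewrite /fib; case: (pickP (fun y => y ^+ 2 + y == t)) => [y0 Hy0 | none]; last first.
  by rewrite (eq_card0 (A := [set y | y ^+ 2 + y == t])) // => y; rewrite inE none.
apply: (@leq_trans #|[set y0; y0 + 1]|); last by rewrite cards2; case: (_ != _).
apply: subset_leq_card; apply/subsetP => y; rewrite !inE => Hy.
have: (y + y0) * (y + y0 + 1) == 0.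
  have ->: (y + y0) * (y + y0 + 1) = (y ^+ 2 + y) + (y0 ^+ 2 + y0) + (1 + 1) * (y * y0) by ring.
  by rewrite (eqP Hy) (eqP Hy0) !addxx mul0r addr0.
by rewrite mulf_eq0 -addrA !addeq0.
Qed.

Lemma fib_val t : fib t = if Tr t == 0 then 2%N else 0%N.
Proof.
case: eqP => [T0 | /eqP Tn0]; last first.
  rewrite /fib (eq_card0 (A := [set y | y ^+ 2 + y == t])) // => y; rewrite inE.
  by apply/negP => /eqP e; move: Tn0; rewrite -e Tr_art eqxx.
have Kin : t \in [set x | Tr x == 0%R] by rewrite inE T0.
apply: (sat (A := [set x | Tr x == 0%R])) Kin => [x _|]; first exact: fib_le2.
have tot : (\sum_(x in [set x | Tr x == 0%R]) fib x = #|F|)%N.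
  rewrite -(card_fibers (fun y : F => y ^+ 2 + y)) [RHS](bigID (mem [set x | Tr x == 0%R])) /=.
  rewrite [X in _ + X]big1 ?addr0 // => x; rewrite inE => Tx.
  rewrite (eq_card0 (A := [set y | y ^+ 2 + y == x])) // => y; rewrite inE.
  by apply/negP => /eqP e; move: Tx; rewrite -e Tr_art eqxx.
rewrite tot cardF2; apply: leq_trans (leq_mul (leqnn 2) card_ker) _.
by rewrite -expnS prednK ?n_gt0.
Qed.

Definition m := ((#|F| - 1) %/ 3)%N.

Lemma m3 : (3 * m = #|F| - 1)%N.
Proof.
have [j hj] : exists j, (4 ^ k = 3 * j + 1)%N.
  elim: (k) => [|i [j hj]]; first by exists 0%N.
  by exists (4 * j + 1)%N; rewrite expnS hj; lia.
by rewrite /m cardF hj addnK mulKn.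
Qed.

Lemma m_gt0 : (0 < m)%N.
Proof.
have := m3; rewrite cardF; case: (k) k_gt0 => // K _; rewrite expnS.
by case: (m) => //; rewrite muln0; have := expn_gt0 4 K; lia.
Qed.

Lemma expm1 (x : F) : x != 0 -> x ^+ (#|F| - 1)%N = 1.
Proof.
move=> xn0; apply: (mulIf xn0); rewrite mul1r -exprSr subn1 prednK ?expf_card //.
by rewrite cardF expn_gt0.
Qed.

Lemma cf0 : cf 0 = 1%N.
Proof.
rewrite /cf -(cards1 (0 : F)); apply: eq_card => x; rewrite !inE expf_eq0 //.
Qed.

Lemma cf_le3 t : t != 0 -> (cf t <= 3)%N.
Proof.
move=> tn0; rewrite /cf; case: (pickP (fun x => x ^+ 3 == t)) => [x0 Hx0 | none]; last first.
  by rewrite (eq_card0 (A := [set x | x ^+ 3 == t])) // => y; rewrite inE none.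
have x0n0 : x0 != 0.
  by apply: contraNneq tn0 => e; rewrite -(eqP Hx0) e expr0n.
apply: (@leq_trans #|[set x0; x0 * xi; x0 * xi ^+ 2]|).
  apply: subset_leq_card; apply/subsetP => x; rewrite !inE => Hx.
  have: (x / x0 - 1) * (x / x0 - xi) * (x / x0 - xi ^+ 2) == 0.
    by rewrite cube_fact expr_div_n (eqP Hx) (eqP Hx0) divff // subrr.
  rewrite !mulf_eq0 !subr_eq0 !(can2_eq (divfK x0n0) (mulfK x0n0)).
by rewrite mul1r (mulrC xi) (mulrC (xi ^+ 2)).
apply: leq_trans (leq_card_setU _ _) _; rewrite cardsU1 !cards1; by case: (_ \notin _).
Qed.

Lemma cf_pos t : t != 0 -> (0 < cf t)%N -> t ^+ m = 1.
Proof.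
move=> tn0; rewrite /cf card_gt0 => /set0Pn [x]; rewrite inE => /eqP xt; rewrite -xt.
have xn0 : x != 0 by move: tn0; rewrite -xt; apply: contraNneq => ->; rewrite expr0n.
by rewrite -exprM m3 expm1.
Qed.

Lemma card_U : (#|[set t : F | t ^+ m == 1%R]| <= m)%N.
Proof.
have nz : ('X^m - 1 : {poly F}) != 0.
  by rewrite -size_poly_eq0 size_Xn_sub_1 ?m_gt0.
have := card_roots nz; rewrite size_Xn_sub_1 ?m_gt0 // ltnS.
apply: leq_trans; apply: subset_leq_card; apply/subsetP => t.
by rewrite !inE /root !hornerE subr_eq0.
Qed.

Lemma cf_val t : t != 0 -> cf t = if t ^+ m == 1 then 3%N else 0%N.
Proof.
move=> tn0; case: eqP => [e | /eqP ne]; last first.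
  by case: (posnP (cf t)) => // /(cf_pos tn0) /eqP; rewrite (negbTE ne).
pose U := [set t : F | t ^+ m == 1%R].
have Ut : t \in U by rewrite inE e.
have U0 : (0 : F) \notin U by rewrite inE expr0n eqn0Ngt m_gt0 eq_sym oner_eq0.
apply: (sat (A := U)) Ut => [x xU|].
  by apply: cf_le3; apply: contraNneq U0 => <-.
have tot : (\sum_(x in U) cf x = #|F| - 1)%N.
  have := card_fibers (fun x : F => x ^+ 3).
  rewrite (bigID (mem U)) /= [X in _ + X](bigD1 0) //= [X in _ + (_ + X)]big1.
    rewrite -/(cf 0) cf0 addr0 => <-; exact: (esym (addnK 1 _)).
  move=> x /andP[xU xn0]; apply/eqP; rewrite -leqn0 leqNgt.
  by apply: contraNN xU => /(cf_pos xn0) ex; rewrite inE ex.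
rewrite tot -m3 leq_mul2l card_U orbT //.
Qed.

Lemma SQ_mod3 : exists K : int, SQ = 1 + 3 * K.
Proof.
exists (\sum_(t | t != 0) (if t ^+ m == 1 then psi t else 0)).
rewrite /SQ (sum_fiber (fun x : F => x ^+ 3) psi) (bigD1 0) //= -/(cf 0) cf0 psi0.
congr (_ + _); rewrite mulr_sumr; apply: eq_bigr => t tn0.
rewrite -/(cf t) cf_val //; case: (_ == _); last by rewrite mulr0.
by rewrite mulrC mulr_natr.
Qed.

Lemma pow_mod3 j : exists L : int, (-2 : int) ^+ j = 1 + 3 * L.
Proof.
elim: j => [|j [L hL]]; first by exists 0; rewrite expr0.
by exists (-1 - 2 * L); rewrite exprS hL; lia.
Qed.

Lemma SQ_val : SQ = (-2) ^+ k.+1.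
Proof.
have sq : SQ * SQ = (-2) ^+ k.+1 * (-2) ^+ k.+1.
  rewrite SQ_sq -exprMn mulrNN -natz cardF natrX exprS.
  by congr (_ * _); rewrite -exprMn.
have : (SQ - (-2) ^+ k.+1) * (SQ + (-2) ^+ k.+1) = 0.
  have -> : (SQ - (-2) ^+ k.+1) * (SQ + (-2) ^+ k.+1) = SQ * SQ - (-2) ^+ k.+1 * (-2) ^+ k.+1 by ring.
  by rewrite sq subrr.
move/eqP; rewrite mulf_eq0 subr_eq0 addr_eq0 => /orP[/eqP // | /eqP e].
have [K hK] := SQ_mod3; have [L hL] := pow_mod3 k.+1.
move: e; rewrite hK hL; lia.
Qed.

Definition pb (b : F) := b ^+ 2 + b + 1.
Definition g (t : F) : int := if t ^+ m == 1 then 2 else -1.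

Lemma dc : (\sum_(b : F) cf (pb b) = \sum_(c : F) fib (c ^+ 3 + 1)%R)%N.
Proof.
rewrite /cf /fib (eq_bigr (fun b => \sum_(c : F) ((c ^+ 3 == pb b) : nat))%N); last first.
  by move=> b _; rewrite card_sum.
rewrite exchange_big /=; apply: eq_bigr => c _; rewrite card_sum.
apply: eq_bigr => b _; congr nat_of_bool.
rewrite -addeq0 -[RHS]addeq0 /pb; congr (_ == 0); ring.
Qed.

Lemma fib_psi (c : F) : (fib (c ^+ 3 + 1))%:Z = 1 + psi (c ^+ 3).
Proof.
rewrite fib_val /psi TrD Tr1 addr0; case: (_ == _) => //.
Qed.

Lemma sum_h : \sum_(b : F) ((cf (pb b))%:Z - 1) = SQ.
Proof.
have dcz : \sum_(b : F) (cf (pb b))%:Z = \sum_(c : F) (fib (c ^+ 3 + 1))%:Z.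
  have := congr1 (fun x : nat => (x%:R : int)) dc; rewrite /= !natr_sum.
  by under eq_bigr => i _ do rewrite natz; under [RHS]eq_bigr => i _ do rewrite natz.
rewrite sumrB dcz; under eq_bigr => c _ do rewrite fib_psi.
by rewrite big_split /= !sumr_const /SQ addrAC subrr add0r.
Qed.

Lemma final_int : \sum_(b | (b != 0) && (pb b != 0)) g (pb b) = -2 + (-2) ^+ k.+1.
Proof.
rewrite (eq_bigr (fun b => (cf (pb b))%:Z - 1)) => [|b /andP[_ nz]]; last first.
  by rewrite /g cf_val //; case: (_ == _).
transitivity (\sum_(b | b != 0) ((cf (pb b))%:Z - 1)).
  rewrite [RHS](bigID (fun b => pb b != 0)) /= [X in _ = _ + X]big1 ?addr0 //.
  by move=> b /andP[_]; rewrite negbK => /eqP ->; rewrite cf0 subrr.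
have := sum_h; rewrite (bigD1 0) //= SQ_val.
have -> : pb 0 = 1 by rewrite /pb expr0n /= !add0r.
rewrite cf_val ?oner_eq0 // expr1n eqxx => e.
move: e; set S := \sum_(i | _) _; set T := (-2) ^+ _; lia.
Qed.

Lemma eta_val (delta : algC) : delta ^+ 3 = 1 -> delta != 1 ->
  forall t : F, t != 0 ->
  cubic_eta xi delta t + (cubic_eta xi delta t) ^+ 2 = (g t)%:~R.
Proof.
move=> d3 d1 t tn0.
have d2 : delta ^+ 2 + delta + 1 = 0.
  by apply: cube_root2 d3; apply: mulfI; rewrite subr_eq0.
rewrite /cubic_eta (negbTE tn0) /= -/m /g.
case: eqP => _; first by rewrite expr1n.
rewrite intrN; case: eqP => _.
  have ->: delta + delta ^+ 2 = -1 + (delta ^+ 2 + delta + 1) by ring.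
  by rewrite d2 addr0.
have ->: delta ^+ 2 + (delta ^+ 2) ^+ 2 = -1 + (delta ^+ 2 + delta + 1) + delta * (delta ^+ 3 - 1) by ring.
by rewrite d2 d3 subrr mulr0 !addr0.
Qed.

Definition fm (b : F) := 1 + b^-1.
Definition finv (a : F) := (a + 1)^-1.
Lemma fK : cancel fm finv.
Proof. by move=> b; rewrite /fm /finv addrC addrA addxx add0r invrK. Qed.
Lemma gK : cancel finv fm.
Proof. by move=> a; rewrite /fm /finv invrK addrC -addrA addxx addr0. Qed.

Lemma xiV : xi^-1 = xi ^+ 2.
Proof. by apply: (mulfI xi0); rewrite (mulfV xi0) -exprS xi3. Qed.
Lemma xi2V : (xi ^+ 2)^-1 = xi.
Proof. by rewrite -xiV invrK. Qed.

Lemma pbfac b : pb b = (b - xi) * (b - xi ^+ 2).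
Proof.
have ->: (b - xi) * (b - xi ^+ 2) = pb b - (xi ^+ 2 + xi + 1) * b + (xi ^+ 3 - 1).
  by rewrite /pb; ring.
by rewrite xi3 subrr xi2 mul0r subr0 addr0.
Qed.

Lemma pred_f b : [&& fm b != -1, fm b != - xi & fm b != - xi ^+ 2] = (b != 0) && (pb b != 0).
Proof.
have f0 : fm 0 = 1 by rewrite /fm invr0 addr0.
have fx : fm xi = xi.
  apply/eqP; rewrite /fm xiV -addeq0.
  have ->: 1 + xi ^+ 2 + xi = xi ^+ 2 + xi + 1 by ring.
  by rewrite xi2.
have fx2 : fm (xi ^+ 2) = xi ^+ 2.
  apply/eqP; rewrite /fm xi2V -addeq0.
  have ->: 1 + xi + xi ^+ 2 = xi ^+ 2 + xi + 1 by ring.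
  by rewrite xi2.
have e1 : (fm b == 1) = (b == 0) by rewrite -f0 (inj_eq (can_inj fK)).
have e2 : (fm b == xi) = (b == xi) by rewrite -{1}fx (inj_eq (can_inj fK)).
have e3 : (fm b == xi ^+ 2) = (b == xi ^+ 2) by rewrite -{1}fx2 (inj_eq (can_inj fK)).
by rewrite !opp2 e1 e2 e3 pbfac mulf_eq0 !subr_eq0 negb_or.
Qed.

Lemma xval b : b != 0 -> ((fm b) ^+ 2 + fm b + 1) / ((fm b) ^+ 2 + 1) = pb b.
Proof.
move=> bn0; rewrite /fm /pb; set c := b^-1.
have ->: (1 + c) ^+ 2 + (1 + c) + 1 = c ^+ 2 + c + 1 + (1 + 1) * (1 + c) by ring.
have ->: (1 + c) ^+ 2 + 1 = c ^+ 2 + (1 + 1) * (1 + c) by ring.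
rewrite addxx mul0r !addr0 /c; field.
by rewrite bn0 oner_eq0.
Qed.

Lemma main_sum (delta : algC) : delta ^+ 3 = 1 -> delta != 1 ->
  \sum_(a : F | [&& a != -1, a != - xi & a != - xi ^+ 2])
     (cubic_eta xi delta ((a ^+ 2 + a + 1) / (a ^+ 2 + 1))
      + (cubic_eta xi delta ((a ^+ 2 + a + 1) / (a ^+ 2 + 1))) ^+ 2)
  = -2 + (-2) ^+ k.+1.
Proof.
move=> d3 d1.
rewrite (reindex fm) /=; last by apply: onW_bij; exists finv; [exact: fK | exact: gK].
rewrite (eq_bigl (fun b => (b != 0) && (pb b != 0))) => [|b]; last exact: pred_f.
rewrite (eq_bigr (fun b => (g (pb b))%:~R)) => [|b /andP[bn0 pn0]]; last first.
  by rewrite xval // eta_val.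
rewrite -rmorph_sum final_int.
by rewrite rmorphD rmorphXn rmorphN rmorph_nat.
Qed.
End Main.

Unset Implicit Arguments.
Theorem lemma4p4 (k : nat) (F : finFieldType) (xi : F) (delta : algC) :
  (0 < k)%N -> #|F| = (4 ^ k)%N ->
  xi ^+ 3 = 1 -> xi != 1 ->
  delta ^+ 3 = 1 -> delta != 1 ->
  \sum_(a : F | [&& a != -1, a != - xi & a != - xi ^+ 2])
     (cubic_eta xi delta ((a ^+ 2 + a + 1) / (a ^+ 2 + 1))
      + (cubic_eta xi delta ((a ^+ 2 + a + 1) / (a ^+ 2 + 1))) ^+ 2)
  = -2 + (-2) ^+ k.+1.
Proof.
move=> kgt cF x3 x1 d3 d1.
exact: (@main_sum F k xi kgt cF x3 x1 delta d3 d1).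
Qed.
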